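(* Let $\mathsf{X}$ be a finite set of propositional variables. A state property $\mathcal{P}$ over $\mathsf{X}$ is of the form $\|\phi\|_{\mathsf{X}}$ for some formula $\phi$ of $\mathsf{BSML}^{\oslash}$ with propositional variables in $\mathsf{X}$ if and only if $\mathcal{P}$ is union closed and invariant under $k$-bisimulation for some $k\in\mathbb{N}$.
   Context: Formulas of $\mathsf{BSML}^{\oslash}$: $\phi ::= p \mid \neg\phi \mid (\phi\wedge\phi) \mid (\phi\vee\phi) \mid \Diamond\phi \mid \mathrm{NE}\mid \oslash\phi$. A model over $\mathsf{X}$ is $M=(W,R,V)$ with $W\ne\emptyset$, $R\subseteq W\times W$, $V:\mathsf{X}\to\wp(W)$; a state is $s\subseteq W$; $R[w]=\{v:wRv\}$. Support/anti-support: $s\models p$ iff $s\subseteq V(p)$; $s\dashv p$ iff $s\cap V(p)=\emptyset$; $s\models\mathrm{NE}$ iff $s\ne\emptyset$; $s\dashv\mathrm{NE}$ iff $s=\emptyset$; $s\models\neg\phi$ iff $s\dashv\phi$; $s\dashv\neg\phi$ iff $s\models\phi$; $s\models\phi\wedge\psi$ iff both; $s\dashv\phi\wedge\psi$ iff $s=t\cup u$ with $t\dashv\phi$, $u\dashv\psi$; $s\models\phi\vee\psi$ iff $s=t\cup u$ with $t\models\phi$, $u\models\psi$; $s\dashv\phi\vee\psi$ iff $s\dashv\phi$ and $s\dashv\psi$; $s\models\Diamond\phi$ iff each $w\in s$ has a nonempty $t\subseteq R[w]$ with $t\models\phi$; $s\dashv\Diamond\phi$ iff $R[w]\dashv\phi$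 for all $w\in s$; $s\models\oslash\phi$ iff $s\models\phi$ or $s=\emptyset$; $s\dashv\oslash\phi$ iff $s\dashv\phi$. A state property over $\mathsf{X}$ is a class of pointed state models $(M,s)$ over $\mathsf{X}$; $\|\phi\|_{\mathsf{X}}:=\{(M,s):M,s\models\phi\}$. World $k$-bisimilarity: $w\rightleftharpoons_0w'$ iff they agree on all $p\in\mathsf{X}$; $w\rightleftharpoons_{k+1}w'$ iff $w\rightleftharpoons_0w'$ and back-and-forth holds between $R[w]$ and $R'[w']$ w.r.t. $\rightleftharpoons_k$. State $k$-bisimilarity $M,s\rightleftharpoons_kM',s'$: each $w\in s$ is $k$-bisimilar to some $w'\in s'$ and vice versa. $\mathcal{P}$ is invariant under $k$-bisimulation if $(M,s)\in\mathcal{P}$ and $M,s\rightleftharpoons_kM',s'$ imply $(M',s')\in\mathcal{P}$; $\mathcal{P}$ is union closed if whenever $(M,s)\in\mathcal{P}$ for all $s$ in a nonempty set $S$ of states on $M$, then $(M,\bigcup S)\in\mathcal{P}$. *)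

(* Defs.v *)
From Stdlib Require Import List.

Definition finite_type (X : Type) : Prop := exists l : list X, forall x : X, In x l.

Inductive form (X : Type) : Type :=
| PVar : X -> form X
| Neg : form X -> form X
| And : form X -> form X -> form X
| Or : form X -> form X -> form X
| Dia : form X -> form X
| NE : form X
| Emp : form X -> form X.

Arguments PVar {X} _.
Arguments Neg {X} _.
Arguments And {X} _ _.
Arguments Or {X} _ _.
Arguments Dia {X} _.
Arguments NE {X}.
Arguments Emp {X} _.

Record model (X : Type) (W : Type) : Type := Model {
  rel : W -> W -> Prop;
  val : X -> W -> Prop;
  carrier_nonempty : inhabited W
}.
Arguments rel {X W} _ _ _.
Arguments val {X W} _ _ _.

Definition state (W : Type) := W -> Prop.

Definition is_union {W : Type} (s t u : state W) : Prop :=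
  forall w, s w <-> (t w \/ u w).

Fixpoint sup {X W : Type} (M : model X W) (phi : form X) (s : state W) {struct phi} : Prop :=
  match phi with
  | PVar p => forall w, s w -> val M p w
  | Neg a => ant M a s
  | And a b => sup M a s /\ sup M b s
  | Or a b => exists t u, is_union s t u /\ sup M a t /\ sup M b u
  | Dia a => forall w, s w ->
       exists t : state W, (exists v, t v) /\ (forall v, t v -> rel M w v) /\ sup M a t
  | NE => exists w, s w
  | Emp a => sup M a s \/ (forall w, ~ s w)
  end
with ant {X W : Type} (M : model X W) (phi : form X) (s : state W) {struct phi} : Prop :=
  match phi with
  | PVar p => forall w, s w -> ~ val M p w
  | Neg a => sup M a s
  | And a b => exists t u, is_union s t u /\ ant M a t /\ ant M b u
  | Or a b => ant M a s /\ ant M b s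
  | Dia a => forall w, s w -> ant M a (rel M w)
  | NE => forall w, ~ s w
  | Emp a => ant M a s
  end.

Definition state_property (X : Type) : Type :=
  forall (W : Type), model X W -> state W -> Prop.

Definition extension {X : Type} (phi : form X) : state_property X :=
  fun W M s => sup M phi s.

Fixpoint wbisim {X W W' : Type} (M : model X W) (M' : model X W') (k : nat)
    (w : W) (w' : W') : Prop :=
  match k with
  | O => forall p : X, val M p w <-> val M' p w'
  | S k' => (forall p : X, val M p w <-> val M' p w') /\
            (forall v, rel M w v -> exists v', rel M' w' v' /\ wbisim M M' k' v v') /\
            (forall v', rel M' w' v' -> exists v, rel M w v /\ wbisim M M' k' v v')
  end.

Definition sbisim {X W W' : Type} (M : model X W) (M' : model X W') (k : nat)
    (s : state W) (s' : state W') : Prop :=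
  (forall w, s w -> exists w', s' w' /\ wbisim M M' k w w') /\
  (forall w', s' w' -> exists w, s w /\ wbisim M M' k w w').

Definition invariant_under_bisim {X : Type} (k : nat) (P : state_property X) : Prop :=
  forall (W W' : Type) (M : model X W) (M' : model X W') (s : state W) (s' : state W'),
    P W M s -> sbisim M M' k s s' -> P W' M' s'.

Definition union_closed {X : Type} (P : state_property X) : Prop :=
  forall (W : Type) (M : model X W) (S : state W -> Prop),
    (exists s, S s) ->
    (forall s, S s -> P W M s) ->
    P W M (fun w => exists s, S s /\ s w).

(* Main.v *)
Require Import Defs.
From Stdlib Require Import List Classical FunctionalExtensionality PropExtensionality Lia.
Import ListNotations.

Definition Un {W} (S : state W -> Prop) : state W := fun w => exists s, S s /\ s w.

Lemma state_ext {W} (s s' : state W) : (forall w, s w <-> s' w) -> s = s'.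
Proof. intros H; extensionality w; apply propositional_extensionality; auto. Qed.

Lemma uc_form {X W} (M : model X W) (phi : form X) : forall S : state W -> Prop,
  (exists s, S s) ->
  ((forall s, S s -> sup M phi s) -> sup M phi (Un S)) /\
  ((forall s, S s -> ant M phi s) -> ant M phi (Un S)).
Proof.
  induction phi as [p|a IHa|a IHa b IHb|a IHa b IHb|a IHa| |a IHa];
    intros S HS; simpl; split; intros H.
  - intros w [s [Ss sw]]. exact (H s Ss w sw).
  - intros w [s [Ss sw]]. exact (H s Ss w sw).
  - apply (IHa S HS); exact H.
  - apply (IHa S HS); exact H.
  - split; [apply (IHa S HS) | apply (IHb S HS)]; intros s Ss; apply (H s Ss).
  - set (St := fun t => exists s u, S s /\ is_union s t u /\ ant M a t /\ ant M b u).
    set (Su := fun u => exists s t, S s /\ is_union s t u /\ ant M a t /\ ant M b u).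
    exists (Un St), (Un Su). split; [|split].
    + intros w; split.
      * intros [s [Ss sw]]. destruct (H s Ss) as [t [u [Hu [Ht Hu']]]].
        apply Hu in sw. destruct sw as [tw|uw].
        -- left. exists t. split; [exists s, u; tauto | auto].
        -- right. exists u. split; [exists s, t; tauto| auto].
      * intros [[t [[s [u [Ss [Hu _]]]] tw]] | [u [[s [t [Ss [Hu _]]]] uw]]];
          exists s; split; auto; apply Hu; auto.
    + apply (IHa St).
      * destruct HS as [s Ss]. destruct (H s Ss) as [t [u [Hu [Ht Hu']]]].
        exists t, s, u; tauto.
      * intros t [s [u [_ [_ [Ht _]]]]]; exact Ht.
    + apply (IHb Su).
      * destruct HS as [s Ss]. destruct (H s Ss) as [t [u [Hu [Ht Hu']]]].
        exists u, s, t; tauto.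
      * intros u [s [t [_ [_ [_ Hu]]]]]; exact Hu.
  - set (St := fun t => exists s u, S s /\ is_union s t u /\ sup M a t /\ sup M b u).
    set (Su := fun u => exists s t, S s /\ is_union s t u /\ sup M a t /\ sup M b u).
    exists (Un St), (Un Su). split; [|split].
    + intros w; split.
      * intros [s [Ss sw]]. destruct (H s Ss) as [t [u [Hu [Ht Hu']]]].
        apply Hu in sw. destruct sw as [tw|uw].
        -- left. exists t. split; [exists s, u; tauto | auto].
        -- right. exists u. split; [exists s, t; tauto| auto].
      * intros [[t [[s [u [Ss [Hu _]]]] tw]] | [u [[s [t [Ss [Hu _]]]] uw]]];
          exists s; split; auto; apply Hu; auto.
    + apply (IHa St).
      * destruct HS as [s Ss]. destruct (H s Ss) as [t [u [Hu [Ht Hu']]]].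
        exists t, s, u; tauto.
      * intros t [s [u [_ [_ [Ht _]]]]]; exact Ht.
    + apply (IHb Su).
      * destruct HS as [s Ss]. destruct (H s Ss) as [t [u [Hu [Ht Hu']]]].
        exists u, s, t; tauto.
      * intros u [s [t [_ [_ [_ Hu]]]]]; exact Hu.
  - split; [apply (IHa S HS) | apply (IHb S HS)]; intros s Ss; apply (H s Ss).
  - intros w [s [Ss sw]]. exact (H s Ss w sw).
  - intros w [s [Ss sw]]. exact (H s Ss w sw).
  - destruct HS as [s Ss]. destruct (H s Ss) as [w sw]. exists w, s; auto.
  - intros w [s [Ss sw]]. exact (H s Ss w sw).
  - destruct (classic (exists s, S s /\ sup M a s)) as [[s0 [S0 H0]]|Hn].
    + left. set (S1 := fun s => S s /\ sup M a s).
      assert (E : Un S1 = Un S).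
      { apply state_ext. intros w; split.
        - intros [s [[Ss _] sw]]; exists s; auto.
        - intros [s [Ss sw]]; exists s; split; auto. split; auto.
          destruct (H s Ss) as [Hs|He]; auto. exfalso; exact (He w sw). }
      rewrite <- E. apply (IHa S1).
      * exists s0; split; auto.
      * intros s [_ Hs]; exact Hs.
    + right. intros w [s [Ss sw]]. destruct (H s Ss) as [Hs|He].
      * apply Hn; exists s; auto.
      * exact (He w sw).
  - apply (IHa S HS); exact H.
Qed.

Fixpoint md {X} (phi : form X) : nat :=
  match phi with
  | PVar _ | NE => 0
  | Neg a | Emp a => md a
  | And a b | Or a b => max (md a) (md b)
  | Dia a => S (md a)
  end.

Lemma wb_val {X W W'} (M : model X W) (M' : model X W') k w w' :
  wbisim M M' k w w' -> forall p, val M p w <-> val M' p w'.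
Proof. destruct k; simpl; intros H; [exact H| exact (proj1 H)]. Qed.

Lemma inv_form {X} (phi : form X) : forall k W W' (M : model X W) (M' : model X W') s s',
  md phi <= k -> sbisim M M' k s s' ->
  (sup M phi s -> sup M' phi s') /\ (ant M phi s -> ant M' phi s').
Proof.
  induction phi as [p|a IHa|a IHa b IHb|a IHa b IHb|a IHa| |a IHa];
    intros k W W' M M' s s' Hk [Hf Hb]; simpl in *; split; intros H.
  - intros w' sw'. destruct (Hb w' sw') as [w [sw Hww]].
    apply (wb_val _ _ _ _ _ Hww). apply H; auto.
  - intros w' sw' Hv. destruct (Hb w' sw') as [w [sw Hww]].
    apply (H w sw). apply (wb_val _ _ _ _ _ Hww); auto.
  - exact (proj2 (IHa k W W' M M' s s' Hk (conj Hf Hb)) H).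
  - exact (proj1 (IHa k W W' M M' s s' Hk (conj Hf Hb)) H).
  - destruct H as [H1 H2]. split.
    + apply (proj1 (IHa k W W' M M' s s' ltac:(lia) (conj Hf Hb)) H1).
    + apply (proj1 (IHb k W W' M M' s s' ltac:(lia) (conj Hf Hb)) H2).
  - destruct H as [t [u [Hu [Ht Hu']]]].
    exists (fun w' => s' w' /\ exists w, t w /\ wbisim M M' k w w').
    exists (fun w' => s' w' /\ exists w, u w /\ wbisim M M' k w w').
    split; [|split].
    + intros w'; split.
      * intros sw'. destruct (Hb w' sw') as [w [sw Hww]]. apply Hu in sw.
        destruct sw as [tw|uw]; [left|right]; split; eauto.
      * intros [[sw' _]|[sw' _]]; auto.
    + apply (fun Hs => proj2 (IHa k W W' M M' t _ ltac:(lia) Hs) Ht). split.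
      * intros w tw. destruct (Hf w (proj2 (Hu w) (or_introl tw))) as [w' [sw' Hww]].
        exists w'; split; eauto.
      * intros w' [_ [w [tw Hww]]]; eauto.
    + apply (fun Hs => proj2 (IHb k W W' M M' u _ ltac:(lia) Hs) Hu'). split.
      * intros w uw. destruct (Hf w (proj2 (Hu w) (or_intror uw))) as [w' [sw' Hww]].
        exists w'; split; eauto.
      * intros w' [_ [w [uw Hww]]]; eauto.
  - destruct H as [t [u [Hu [Ht Hu']]]].
    exists (fun w' => s' w' /\ exists w, t w /\ wbisim M M' k w w').
    exists (fun w' => s' w' /\ exists w, u w /\ wbisim M M' k w w').
    split; [|split].
    + intros w'; split.
      * intros sw'. destruct (Hb w' sw') as [w [sw Hww]]. apply Hu in sw.
        destruct sw as [tw|uw]; [left|right]; split; eauto.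
      * intros [[sw' _]|[sw' _]]; auto.
    + apply (fun Hs => proj1 (IHa k W W' M M' t _ ltac:(lia) Hs) Ht). split.
      * intros w tw. destruct (Hf w (proj2 (Hu w) (or_introl tw))) as [w' [sw' Hww]].
        exists w'; split; eauto.
      * intros w' [_ [w [tw Hww]]]; eauto.
    + apply (fun Hs => proj1 (IHb k W W' M M' u _ ltac:(lia) Hs) Hu'). split.
      * intros w uw. destruct (Hf w (proj2 (Hu w) (or_intror uw))) as [w' [sw' Hww]].
        exists w'; split; eauto.
      * intros w' [_ [w [uw Hww]]]; eauto.
  - destruct H as [H1 H2]. split.
    + apply (proj2 (IHa k W W' M M' s s' ltac:(lia) (conj Hf Hb)) H1).
    + apply (proj2 (IHb k W W' M M' s s' ltac:(lia) (conj Hf Hb)) H2).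
  - destruct k as [|k]; [lia|].
    intros w' sw'. destruct (Hb w' sw') as [w [sw [Hv [Hfo Hba]]]].
    destruct (H w sw) as [t [[v tv] [tR Ht]]].
    exists (fun v' => rel M' w' v' /\ exists v, t v /\ wbisim M M' k v v').
    split; [|split].
    + destruct (Hfo v (tR v tv)) as [v' [Rv' Hvv]]. exists v'; split; eauto.
    + intros v' [R' _]; auto.
    + apply (fun Hs => proj1 (IHa k W W' M M' t _ ltac:(lia) Hs) Ht). split.
      * intros x tx. destruct (Hfo x (tR x tx)) as [x' [Rx' Hxx]]. exists x'; split; eauto.
      * intros x' [_ [x [tx Hxx]]]; eauto.
  - destruct k as [|k]; [lia|].
    intros w' sw'. destruct (Hb w' sw') as [w [sw [Hv [Hfo Hba]]]].
    apply (fun Hs => proj2 (IHa k W W' M M' (rel M w) _ ltac:(lia) Hs) (H w sw)). split.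
    + intros x Rx. destruct (Hfo x Rx) as [x' [Rx' Hxx]]; eauto.
    + intros x' Rx'. destruct (Hba x' Rx') as [x [Rx Hxx]]; eauto.
  - destruct H as [w sw]. destruct (Hf w sw) as [w' [sw' _]]; eauto.
  - intros w' sw'. destruct (Hb w' sw') as [w [sw _]]. exact (H w sw).
  - destruct H as [H|H].
    + left. exact (proj1 (IHa k W W' M M' s s' Hk (conj Hf Hb)) H).
    + right. intros w' sw'. destruct (Hb w' sw') as [w [sw _]]. exact (H w sw).
  - exact (proj2 (IHa k W W' M M' s s' Hk (conj Hf Hb)) H).
Qed.

Inductive cform (X : Type) : Type :=
| CVar : X -> cform X
| CTop : cform X
| CNeg : cform X -> cform X
| CAnd : cform X -> cform X -> cform X
| COr : cform X -> cform X -> cform X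
| CDia : cform X -> cform X.
Arguments CVar {X} _.
Arguments CTop {X}.
Arguments CNeg {X} _.
Arguments CAnd {X} _ _.
Arguments COr {X} _ _.
Arguments CDia {X} _.

Fixpoint emb {X} (c : cform X) : form X :=
  match c with
  | CVar p => PVar p
  | CTop => Emp NE
  | CNeg a => Neg (emb a)
  | CAnd a b => And (emb a) (emb b)
  | COr a b => Or (emb a) (emb b)
  | CDia a => Dia (emb a)
  end.

Fixpoint truth {X W} (M : model X W) (w : W) (c : cform X) : Prop :=
  match c with
  | CVar p => val M p w
  | CTop => True
  | CNeg a => ~ truth M w a
  | CAnd a b => truth M w a /\ truth M w b
  | COr a b => truth M w a \/ truth M w b
  | CDia a => exists v, rel M w v /\ truth M v a
  end.

Lemma flat {X W} (M : model X W) (c : cform X) : forall s,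
  (sup M (emb c) s <-> forall w, s w -> truth M w c) /\
  (ant M (emb c) s <-> forall w, s w -> ~ truth M w c).
Proof.
  induction c as [p| |a IHa|a IHa b IHb|a IHa b IHb|a IHa]; intros s; simpl; split; split; intros H.
  - exact H.
  - exact H.
  - exact H.
  - exact H.
  - auto.
  - destruct (classic (exists w, s w)) as [E|E]; [left; exact E| right].
    intros w sw; apply E; eauto.
  - intros w sw _; exact (H w sw).
  - intros w sw; exact (H w sw I).
  - exact (proj1 (proj2 (IHa s)) H).
  - exact (proj2 (proj2 (IHa s)) H).
  - pose proof (proj1 (proj1 (IHa s)) H) as Htmp; clear H; rename Htmp into H. intros w sw Hn; exact (Hn (H w sw)).
  - apply (proj1 (IHa s)). intros w sw. apply NNPP. exact (H w sw).
  - destruct H as [H1 H2]. pose proof (proj1 (proj1 (IHa s)) H1) as Htmp; clear H1; rename Htmp into H1. pose proof (proj1 (proj1 (IHb s)) H2) as Htmp; clear H2; rename Htmp into H2.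
    intros w sw; split; auto.
  - split; [apply (proj1 (IHa s))|apply (proj1 (IHb s))]; intros w sw; apply (H w sw).
  - destruct H as [t [u [Hu [Ht Hu']]]]. pose proof (proj1 (proj2 (IHa t)) Ht) as Htmp; clear Ht; rename Htmp into Ht.
    pose proof (proj1 (proj2 (IHb u)) Hu') as Htmp; clear Hu'; rename Htmp into Hu'. intros w sw [A B].
    apply Hu in sw; destruct sw as [tw|uw]; [exact (Ht w tw A)|exact (Hu' w uw B)].
  - exists (fun w => s w /\ ~ truth M w a), (fun w => s w /\ ~ truth M w b).
    split; [|split].
    + intros w; split.
      * intros sw. destruct (classic (truth M w a)) as [A|A]; [right|left]; split; auto.
        intros B; exact (H w sw (conj A B)).
      * intros [[sw _]|[sw _]]; auto.
    + apply (proj2 (IHa _)). intros w [_ Hw]; exact Hw.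
    + apply (proj2 (IHb _)). intros w [_ Hw]; exact Hw.
  - destruct H as [t [u [Hu [Ht Hu']]]]. pose proof (proj1 (proj1 (IHa t)) Ht) as Htmp; clear Ht; rename Htmp into Ht.
    pose proof (proj1 (proj1 (IHb u)) Hu') as Htmp; clear Hu'; rename Htmp into Hu'. intros w sw.
    apply Hu in sw; destruct sw as [tw|uw]; [left; exact (Ht w tw)|right; exact (Hu' w uw)].
  - exists (fun w => s w /\ truth M w a), (fun w => s w /\ truth M w b).
    split; [|split].
    + intros w; split.
      * intros sw. destruct (H w sw) as [A|B]; [left|right]; split; auto.
      * intros [[sw _]|[sw _]]; auto.
    + apply (proj1 (IHa _)). intros w [_ Hw]; exact Hw.
    + apply (proj1 (IHb _)). intros w [_ Hw]; exact Hw.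
  - destruct H as [H1 H2]. pose proof (proj1 (proj2 (IHa s)) H1) as Htmp; clear H1; rename Htmp into H1. pose proof (proj1 (proj2 (IHb s)) H2) as Htmp; clear H2; rename Htmp into H2.
    intros w sw [A|B]; [exact (H1 w sw A)|exact (H2 w sw B)].
  - split; [apply (proj2 (IHa s))|apply (proj2 (IHb s))]; intros w sw ?; apply (H w sw); auto.
  - intros w sw. destruct (H w sw) as [t [[v tv] [tR Ht]]].
    pose proof (proj1 (proj1 (IHa t)) Ht) as Htmp; clear Ht; rename Htmp into Ht. exists v; split; auto.
  - intros w sw. destruct (H w sw) as [v [Rv Tv]].
    exists (fun x => x = v). split; [exists v; auto|split].
    + intros x ->; exact Rv.
    + apply (proj1 (IHa _)). intros x ->; exact Tv.
  - intros w sw [v [Rv Tv]]. specialize (H w sw). pose proof (proj1 (proj2 (IHa _)) H) as Htmp; clear H; rename Htmp into H.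
    exact (H v Rv Tv).
  - intros w sw. apply (proj2 (IHa _)). intros v Rv Tv. apply (H w sw). eauto.
Qed.

Fixpoint pow {A} (L : list A) : list (list A) :=
  match L with
  | [] => [[]]
  | x :: L' => map (cons x) (pow L') ++ pow L'
  end.

Lemma pow_incl {A} (L : list A) : forall T, In T (pow L) -> forall x, In x T -> In x L.
Proof.
  induction L as [|a L IHL]; simpl; intros T HT x Hx.
  - destruct HT as [<-|[]]; destruct Hx.
  - apply in_app_or in HT; destruct HT as [HT|HT].
    + apply in_map_iff in HT; destruct HT as [T' [<- HT']].
      destruct Hx as [<-|Hx]; [left; auto| right; eapply IHL; eauto].
    + right; eapply IHL; eauto.
Qed.

Lemma pow_filter {A} (L : list A) (Q : A -> Prop) :
  exists T, In T (pow L) /\ forall x, In x T <-> (In x L /\ Q x).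
Proof.
  induction L as [|a L IH]; simpl.
  - exists []; split; [left; auto| intros x; simpl; tauto].
  - destruct IH as [T [HT HTx]]. destruct (classic (Q a)) as [Qa|Qa].
    + exists (a :: T); split.
      * apply in_or_app; left; apply in_map; auto.
      * intros x; simpl; rewrite HTx; split.
        -- intros [<-|[H1 H2]]; auto.
        -- intros [[<-|H1] H2]; auto.
    + exists T; split.
      * apply in_or_app; right; auto.
      * intros x; rewrite HTx; split; [intros [H1 H2]; auto| intros [[<-|H1] H2]; [contradiction| auto]].
Qed.

Fixpoint lits {X} (l : list X) : list (cform X) :=
  match l with
  | [] => [CTop]
  | p :: l' => flat_map (fun c => [CAnd (CVar p) c; CAnd (CNeg (CVar p)) c]) (lits l')
  end.

Lemma lits_ex {X W} (M : model X W) w (l : list X) : exists c, In c (lits l) /\ truth M w c.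
Proof.
  induction l as [|p l IH]; simpl.
  - exists CTop; simpl; auto.
  - destruct IH as [c [Hc Tc]].
    destruct (classic (val M p w)) as [V|V].
    + exists (CAnd (CVar p) c); split; [|simpl; auto].
      apply in_flat_map; exists c; simpl; auto.
    + exists (CAnd (CNeg (CVar p)) c); split; [|simpl; auto].
      apply in_flat_map; exists c; simpl; auto.
Qed.

Lemma lits_val {X W W'} (M : model X W) (M' : model X W') w w' (l : list X) :
  forall c, In c (lits l) -> truth M w c -> truth M' w' c ->
  forall p, In p l -> (val M p w <-> val M' p w').
Proof.
  induction l as [|p0 l IH]; simpl; intros c Hc H1 H2 p Hp; [destruct Hp|].
  apply in_flat_map in Hc. destruct Hc as [c' [Hc' Hc]].
  simpl in Hc. destruct Hc as [<-|[<-|[]]]; simpl in H1, H2;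
    destruct H1 as [A1 B1]; destruct H2 as [A2 B2];
    destruct Hp as [<-|Hp]; try tauto; eapply IH; eauto.
Qed.

Fixpoint bigDia {X} (T : list (cform X)) : cform X :=
  match T with [] => CTop | c :: T' => CAnd (CDia c) (bigDia T') end.
Fixpoint bigOr {X} (T : list (cform X)) : cform X :=
  match T with [] => CNeg CTop | c :: T' => COr c (bigOr T') end.
Definition CBox {X} (c : cform X) := CNeg (CDia (CNeg c)).

Fixpoint Chi {X} (l : list X) (k : nat) : list (cform X) :=
  match k with
  | 0 => lits l
  | S k' => flat_map (fun c => map (fun T => CAnd c (CAnd (bigDia T) (CBox (bigOr T))))
                                   (pow (Chi l k'))) (lits l)
  end.

Lemma bigDia_iff {X W} (M : model X W) w T :
  truth M w (bigDia T) <-> forall c, In c T -> exists v, rel M w v /\ truth M v c.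
Proof.
  induction T as [|c T IH]; simpl.
  - split; auto. intros _ c [].
  - rewrite IH. split.
    + intros [H1 H2] c' [<-|Hc]; auto.
    + intros H; split; auto.
Qed.

Lemma bigOr_iff {X W} (M : model X W) w T :
  truth M w (bigOr T) <-> exists c, In c T /\ truth M w c.
Proof.
  induction T as [|c T IH]; simpl.
  - split; [intros H; exfalso; auto| intros [c [[] _]]].
  - rewrite IH. split.
    + intros [H|[c' [Hc H]]]; eauto.
    + intros [c' [[<-|Hc] H]]; eauto.
Qed.

Lemma box_iff {X W} (M : model X W) w c :
  truth M w (CBox c) <-> forall v, rel M w v -> truth M v c.
Proof.
  simpl. split.
  - intros H v Rv. apply NNPP. intros Hn. apply H. eauto.
  - intros H [v [Rv Hn]]. exact (Hn (H v Rv)).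
Qed.

Lemma Chi_ex {X W} (M : model X W) (l : list X) k : forall w,
  exists c, In c (Chi l k) /\ truth M w c.
Proof.
  induction k as [|k IH]; intros w; simpl.
  - apply lits_ex.
  - destruct (lits_ex M w l) as [c0 [Hc0 Tc0]].
    destruct (pow_filter (Chi l k) (fun c => exists v, rel M w v /\ truth M v c)) as [T [HT HTx]].
    exists (CAnd c0 (CAnd (bigDia T) (CBox (bigOr T)))). split.
    + apply in_flat_map. exists c0; split; auto. apply in_map_iff; exists T; auto.
    + split; [exact Tc0|split].
      * apply bigDia_iff. intros c Hc. apply HTx in Hc. tauto.
      * apply box_iff. intros v Rv. apply bigOr_iff.
        destruct (IH v) as [c [Hc Tc]]. exists c; split; auto.
        apply HTx; split; eauto.
Qed.

Lemma Chi_bis {X} (l : list X) (Hl : forall p, In p l) k : forall c, In c (Chi l k) ->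
  forall W W' (M : model X W) (M' : model X W') w w',
  truth M w c -> truth M' w' c -> wbisim M M' k w w'.
Proof.
  induction k as [|k IH]; simpl; intros c Hc W W' M M' w w' H1 H2.
  - intros p. eapply lits_val; eauto.
  - apply in_flat_map in Hc. destruct Hc as [c0 [Hc0 Hc]].
    apply in_map_iff in Hc. destruct Hc as [T [<- HT]].
    destruct H1 as [A1 [D1 B1]]. destruct H2 as [A2 [D2 B2]].
    pose proof (proj1 (bigDia_iff M w T) D1) as D1'.
    pose proof (proj1 (bigDia_iff M' w' T) D2) as D2'.
    pose proof (proj1 (box_iff M w _) B1) as B1'.
    pose proof (proj1 (box_iff M' w' _) B2) as B2'.
    clear D1 D2 B1 B2.
    split; [|split].
    + intros p. eapply lits_val; eauto.
    + intros v Rv. specialize (B1' v Rv). apply bigOr_iff in B1'.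
      destruct B1' as [c [Hc Tc]]. destruct (D2' c Hc) as [v' [Rv' Tv']].
      exists v'; split; auto. eapply IH; eauto. eapply pow_incl; eauto.
    + intros v' Rv'. specialize (B2' v' Rv'). apply bigOr_iff in B2'.
      destruct B2' as [c [Hc Tc]]. destruct (D1' c Hc) as [v [Rv Tv]].
      exists v; split; auto. eapply IH; eauto. eapply pow_incl; eauto.
Qed.

Fixpoint theta {X} (T : list (cform X)) : form X :=
  match T with
  | [] => Neg NE
  | c :: T' => Or (And (emb c) NE) (theta T')
  end.

Lemma theta_iff {X W} (M : model X W) (T : list (cform X)) : forall s,
  sup M (theta T) s <->
  ((forall w, s w -> exists c, In c T /\ truth M w c) /\
   (forall c, In c T -> exists w, s w /\ truth M w c)).
Proof.
  induction T as [|c T IH]; intros s; simpl.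
  - split.
    + intros H; split; [intros w sw; exfalso; exact (H w sw)| intros c []].
    + intros [H _] w sw. destruct (H w sw) as [c [[] _]].
  - split.
    + intros [t [u [Hu [[Ht [w0 tw0]] Hu']]]].
      pose proof (proj1 (proj1 (flat M c t)) Ht) as Ht'.
      pose proof (proj1 (IH u) Hu') as [U1 U2].
      split.
      * intros w sw. apply Hu in sw. destruct sw as [tw|uw].
        -- exists c; auto.
        -- destruct (U1 w uw) as [c' [Hc' Tc']]; eauto.
      * intros c' [<-|Hc'].
        -- exists w0; split; auto. apply Hu; auto.
        -- destruct (U2 c' Hc') as [w [uw Tw]]. exists w; split; auto. apply Hu; auto.
    + intros [H1 H2].
      exists (fun w => s w /\ truth M w c), (fun w => s w /\ exists c', In c' T /\ truth M w c').
      split; [|split; [split|]].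
      * intros w; split.
        -- intros sw. destruct (H1 w sw) as [c' [[<-|Hc'] Tc']]; [left|right]; split; eauto.
        -- intros [[sw _]|[sw _]]; auto.
      * apply (proj1 (flat M c _)). intros w [_ Tw]; exact Tw.
      * destruct (H2 c (or_introl eq_refl)) as [w [sw Tw]]. exists w; split; auto.
      * apply (proj2 (IH _)). split.
        -- intros w [_ Hw]; exact Hw.
        -- intros c' Hc'. destruct (H2 c' (or_intror Hc')) as [w [sw Tw]].
           exists w; split; eauto.
Qed.

Fixpoint orl {X} (Ts : list (list (cform X))) : form X :=
  match Ts with
  | [] => Neg NE
  | T :: Ts' => Or (Emp (theta T)) (orl Ts')
  end.

Lemma orl_empty {X W} (M : model X W) Ts : forall s, (forall w, ~ s w) -> sup M (orl Ts) s.
Proof.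
  induction Ts as [|T Ts IH]; intros s Hs; simpl.
  - exact Hs.
  - exists s, s. split; [intros w; tauto|split].
    + right; exact Hs.
    + apply IH; exact Hs.
Qed.

Lemma orl_in {X W} (M : model X W) Ts : forall T s, In T Ts -> sup M (theta T) s -> sup M (orl Ts) s.
Proof.
  induction Ts as [|T0 Ts IH]; intros T s HT Hs; simpl in *; [destruct HT|].
  destruct HT as [<-|HT].
  - exists s, (fun _ => False). split; [intros w; tauto|split].
    + left; exact Hs.
    + apply orl_empty; auto.
  - exists (fun _ => False), s. split; [intros w; tauto|split].
    + right; auto.
    + eapply IH; eauto.
Qed.

Lemma orl_sound {X W} (M : model X W) (G : state W -> Prop) Ts :
  (forall T s, In T Ts -> sup M (theta T) s -> G s) ->
  (forall s t u, is_union s t u -> G t -> G u -> G s) ->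
  (forall s t, (forall w, s w <-> t w) -> G t -> G s) ->
  forall s, sup M (orl Ts) s -> (forall w, ~ s w) \/ G s.
Proof.
  intros HT HU HE. induction Ts as [|T Ts IH]; intros s Hs; simpl in Hs.
  - left; exact Hs.
  - destruct Hs as [t [u [Hu [Ht Hu']]]].
    assert (IH' : (forall w, ~ u w) \/ G u).
    { apply IH; auto. intros T' s' HT' Hs'. eapply HT; [right; exact HT'| exact Hs']. }
    assert (Gt : (forall w, ~ t w) \/ G t).
    { destruct Ht as [Ht|Ht]; [right; eapply HT; [left; reflexivity| exact Ht] | left; exact Ht]. }
    destruct Gt as [Et|Gt]; destruct IH' as [Eu|Gu].
    + left. intros w sw. apply Hu in sw. destruct sw as [tw|uw]; [exact (Et w tw)|exact (Eu w uw)].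
    + right. apply (HE s u); auto. intros w. rewrite (Hu w). split; [intros [tw|uw]; [exfalso; exact (Et w tw)|exact uw] | auto].
    + right. apply (HE s t); auto. intros w. rewrite (Hu w). split; [intros [tw|uw]; [exact tw|exfalso; exact (Eu w uw)] | auto].
    + right. eapply HU; eauto.
Qed.

Theorem theorem3p17 (X : Type) (HX : finite_type X) (P : state_property X) :
  (exists phi : form X, forall (W : Type) (M : model X W) (s : state W),
      P W M s <-> extension phi W M s)
  <->
  (union_closed P /\ exists k : nat, invariant_under_bisim k P).
Proof.
  split.
  - intros [phi Hphi]. split.
    + intros W M S HS HP. apply Hphi. unfold extension.
      apply (proj1 (uc_form M phi S HS)). intros s Ss; apply Hphi; auto.
    + exists (md phi). intros W W' M M' s s' HP Hb. apply Hphi. unfold extension.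
      apply (proj1 (inv_form phi (md phi) W W' M M' s s' (le_n _) Hb)).
      apply Hphi; auto.
  - intros [HU [k HI]]. destruct HX as [l Hl].
    assert (HE : forall W (M : model X W) s t, (forall w, s w <-> t w) -> P W M t -> P W M s).
    { intros W M s t Hst Ht. replace s with t; auto. apply state_ext. intros w; rewrite Hst; tauto. }
    assert (HUn : forall W (M : model X W) s t u, is_union s t u -> P W M t -> P W M u -> P W M s).
    { intros W M s t u Hu Ht Hu'.
      apply (HE W M s (fun w => exists x, (x = t \/ x = u) /\ x w)).
      - intros w. rewrite (Hu w). split.
        + intros [tw|uw]; eauto.
        + intros [x [[->| ->] xw]]; auto.
      - apply HU; [exists t; auto|]. intros x [->| ->]; auto. }
    set (Ch := Chi l k).
    set (Realized := fun T : list (cform X) =>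
      exists W (M : model X W) s, P W M s /\ sup M (theta T) s).
    destruct (pow_filter (pow Ch) Realized) as [Ts [_ HTs]].
    assert (K2 : forall T W (M : model X W) s, In T Ts -> sup M (theta T) s -> P W M s).
    { intros T W M s HT Hs. apply HTs in HT. destruct HT as [HTp [W0 [M0 [s0 [HP0 Hs0]]]]].
      apply (HI W0 W M0 M s0 s HP0).
      pose proof (proj1 (theta_iff M0 T s0) Hs0) as [A0 B0].
      pose proof (proj1 (theta_iff M T s) Hs) as [A1 B1].
      split.
      - intros w0 sw0. destruct (A0 w0 sw0) as [c [Hc Tc]].
        destruct (B1 c Hc) as [w [sw Tw]]. exists w; split; auto.
        eapply (Chi_bis l Hl k c); eauto. eapply pow_incl; eauto.
      - intros w sw. destruct (A1 w sw) as [c [Hc Tc]].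
        destruct (B0 c Hc) as [w0 [sw0 Tw0]]. exists w0; split; auto.
        eapply (Chi_bis l Hl k c); eauto. eapply pow_incl; eauto. }
    assert (K1 : forall W (M : model X W) s, P W M s -> sup M (orl Ts) s).
    { intros W M s HP.
      destruct (pow_filter Ch (fun c => exists w, s w /\ truth M w c)) as [T [HT HTx]].
      assert (Hth : sup M (theta T) s).
      { apply (proj2 (theta_iff M T s)). split.
        - intros w sw. destruct (Chi_ex M l k w) as [c [Hc Tc]].
          exists c; split; auto. apply HTx. split; eauto.
        - intros c Hc. apply HTx in Hc. tauto. }
      apply (orl_in M Ts T s); auto.
      apply HTs. split; auto. exists W, M, s; auto. }
    destruct (classic (exists W (M : model X W) s, P W M s /\ forall w, ~ s w)) as [Emp0|NEmp].
    + exists (orl Ts). intros W M s. unfold extension. split.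
      * apply K1.
      * intros Hs. destruct (orl_sound M (P W M) Ts) with (s := s) as [Es|Ps]; auto.
        -- intros T s' HT Hs'. eapply K2; eauto.
        -- intros s1 t u Hu Ht Hu'. eapply HUn; eauto.
        -- intros s1 t Hst Ht. eapply HE; eauto.
        -- destruct Emp0 as [W0 [M0 [s0 [HP0 E0]]]].
           apply (HI W0 W M0 M s0 s HP0). split.
           ++ intros w sw; exfalso; exact (E0 w sw).
           ++ intros w sw; exfalso; exact (Es w sw).
    + exists (And (orl Ts) NE). intros W M s. unfold extension. simpl. split.
      * intros HP. split; [apply K1; auto|].
        apply NNPP. intros Hn. apply NEmp. exists W, M, s. split; auto.
        intros w sw; apply Hn; eauto.
      * intros [Hs [w0 sw0]]. destruct (orl_sound M (P W M) Ts) with (s := s) as [Es|Ps]; auto.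
        -- intros T s' HT Hs'. eapply K2; eauto.
        -- intros s1 t u Hu Ht Hu'. eapply HUn; eauto.
        -- intros s1 t Hst Ht. eapply HE; eauto.
        -- exfalso; exact (Es w0 sw0).
Qed.
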